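(* For every vertex $\mathbf{x}$ of $P^n_{\mathrm{SEP}}$, the optimal values of the linear programs $\mathcal{D}\mathrm{OPT}^+(\mathbf{x})$ and $\mathcal{D}\mathrm{OPT}^{\mathrm{II}}(\mathbf{x})$ coincide.
   Context: $K_n=(V_n,E_n)$ is the complete undirected graph on $n$ nodes; $\delta(S)$ is the set of edges with exactly one endpoint in $S$. $P^n_{\mathrm{SEP}}=\{\mathbf{x}\in\mathbb{R}^{E_n} : \sum_{e\in\delta(v)}x_e=2\ \forall v;\ \sum_{e\in\delta(S)}x_e\ge 2\ \forall S \text{ with } 3\le|S|\le n-3;\ 0\le x_e\le 1\}$; a vertex is an extreme point. The support graph of $\mathbf{x}$ is $G_{\mathbf{x}}=(V_n,E_{\mathbf{x}})$ with $E_{\mathbf{x}}=\{e:x_e>0\}$. A tour is a Hamiltonian cycle of $K_n$, identified with its 0/1 characteristic vector $\mathbf{t}$. A walk on a graph $G$ is a closed walk visiting every node at least once; it is identified with its characteristic vector $\mathbf{w}$, where $w_{ij}$ is the number of times the edge $ij$ is traversed, and only walks with $w_{ij}\in\{0,1,2\}$ for all edges are considered (so there are finitely many). Edges are unordered ($ij=ji$), and accordingly $\lambda_{ijk}$ and $\lambda_{jik}$ denote the same variable (but $\lambda_{ijk}$ and $\lambda_{kji}$ are different). $\mathcal{D}\mathrm{OPT}^+(\mathbf{x})$: maximize $\sum_{\mathbf{t}\text{ tour}}\mu_{\mathbf{t}}$ subject to $\sum_{k\ne i,j}(-\lambda_{ijk}+\lambda_{ikj}+\lambda_{jki})+\sum_{\mathbf{t}}t_{ij}\mu_{\mathbf{t}}\le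 x_{ij}$ for all $ij\in E_n$, $\lambda_{ijk}\ge0$ for all $ij\in E_n$, $k\in V_n\setminus\{i,j\}$, and $\mu_{\mathbf{t}}\ge0$ for all tours $\mathbf{t}$. $\mathcal{D}\mathrm{OPT}^{\mathrm{II}}(\mathbf{x})$: maximize $\sum_{\mathbf{w}\text{ walk on }G_{\mathbf{x}}}\mu_{\mathbf{w}}$ subject to $\sum_{\mathbf{w}\text{ walk on }G_{\mathbf{x}}}w_{ij}\mu_{\mathbf{w}}\le x_{ij}$ for all $ij\in E_{\mathbf{x}}$, and $\mu_{\mathbf{w}}\ge0$. *)

(* Defs.v *)
From HB Require Import structures.
From mathcomp Require Import all_boot all_order all_algebra.
From mathcomp Require Import boolp.
Set Implicit Arguments. Unset Strict Implicit. Unset Printing Implicit Defensive.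
Import Order.TTheory GRing.Theory Num.Theory.
Local Open Scope ring_scope.

(* Nodes of K_n are 'I_n; edges are the 2-element subsets of 'I_n. *)
Definition edge (n : nat) := {e : {set 'I_n} | #|e| == 2}.

Section SEP.
Variables (R : realFieldType) (n : nat).

Definition delta (S : {set 'I_n}) : {set edge n} :=
  [set e : edge n | #|val e :&: S| == 1%N].

Definition in_PSEP (x : edge n -> R) : Prop :=
  [/\ (forall v : 'I_n, \sum_(e in delta [set v]) x e = 2),
      (forall S : {set 'I_n}, (3 <= #|S|)%N -> (#|S| <= n - 3)%N ->
          2 <= \sum_(e in delta S) x e)
    & (forall e, 0 <= x e <= 1)].

Definition is_vertex_PSEP (x : edge n -> R) : Prop :=
  in_PSEP x /\
  forall (y z : edge n -> R) (t : R), in_PSEP y -> in_PSEP z -> 0 < t < 1 ->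
    (forall e, x e = t * y e + (1 - t) * z e) -> forall e, y e = z e.

(* a tour (Hamiltonian cycle of K_n), as its edge set: its characteristic
   vector is t_e = (e \in T) *)
Definition is_tour (T : {set edge n}) : Prop :=
  exists s : seq 'I_n,
    [/\ uniq s, (forall v : 'I_n, v \in s)
      & T = [set e : edge n | [exists v : 'I_n, val e == [set v; next s v]]]].

(* w : E_n -> {0,1,2} is (the characteristic vector of) a walk on G_x:
   a closed walk s_0 s_1 ... s_{m-1} s_0 using only edges of the support
   graph, visiting every node, and traversing each edge exactly w_e times. *)
Definition is_walk (x : edge n -> R) (w : {ffun edge n -> 'I_3}) : Prop :=
  exists s : seq 'I_n,
    [/\ (forall v : 'I_n, v \in s),
        all (fun p : 'I_n * 'I_n =>
               [exists e : edge n, (val e == [set p.1; p.2]) && (0 < x e)])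
            (zip s (rot 1 s))
      & forall e : edge n,
          nat_of_ord (w e) =
          count (fun p : 'I_n * 'I_n => val e == [set p.1; p.2]) (zip s (rot 1 s))].

(* ---- DOPT^+(x) ----
   lambda_{ijk} is encoded as L [set i; j] k (so lambda_{ijk} = lambda_{jik});
   mu_t is encoded as mu T for the tour edge set T. *)
Definition feasible_DOPTplus (x : edge n -> R)
    (L : {set 'I_n} -> 'I_n -> R) (mu : {set edge n} -> R) : Prop :=
  [/\ (forall (e : edge n) (i j : 'I_n), val e = [set i; j] ->
        \sum_(k | k \notin val e) (- L [set i; j] k + L [set i; k] j + L [set j; k] i)
        + \sum_(T | `[< is_tour T >]) (e \in T)%:R * mu T <= x e),
      (forall i j k : 'I_n, i != j -> k != i -> k != j -> 0 <= L [set i; j] k)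
    & (forall T, is_tour T -> 0 <= mu T)].

Definition obj_DOPTplus (mu : {set edge n} -> R) : R :=
  \sum_(T | `[< is_tour T >]) mu T.

Definition opt_DOPTplus (x : edge n -> R) (v : R) : Prop :=
  (exists L mu, feasible_DOPTplus x L mu /\ obj_DOPTplus mu = v) /\
  (forall L mu, feasible_DOPTplus x L mu -> obj_DOPTplus mu <= v).

Definition feasible_DOPTII (x : edge n -> R) (mu : {ffun edge n -> 'I_3} -> R) : Prop :=
  (forall e : edge n, 0 < x e ->
     \sum_(w | `[< is_walk x w >]) (nat_of_ord (w e))%:R * mu w <= x e) /\
  (forall w, is_walk x w -> 0 <= mu w).

Definition obj_DOPTII (x : edge n -> R) (mu : {ffun edge n -> 'I_3} -> R) : R :=
  \sum_(w | `[< is_walk x w >]) mu w.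

Definition opt_DOPTII (x : edge n -> R) (v : R) : Prop :=
  (exists mu, feasible_DOPTII x mu /\ obj_DOPTII x mu = v) /\
  (forall mu, feasible_DOPTII x mu -> obj_DOPTII x mu <= v).

End SEP.

(* Main.v *)
Require Import Defs.
From HB Require Import structures.
From mathcomp Require Import all_boot all_order all_algebra.
From mathcomp Require Import boolp.
From mathcomp Require Import zify ring lra.
Set Implicit Arguments. Unset Strict Implicit. Unset Printing Implicit Defensive.
Import Order.TTheory GRing.Theory Num.Theory.
Local Open Scope ring_scope.
Section Farkas.
Variable R : realFieldType.
Variable I : finType.
Definition cstr := ({ffun I -> R} * R)%type.
Definition satc (y : {ffun I -> R}) (c : cstr) := \sum_i c.1 i * y i <= c.2.

Inductive deriv (J : finType) (cs : J -> cstr) : cstr -> Prop :=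
| Dax j : deriv cs (cs j)
| Dadd c1 c2 : deriv cs c1 -> deriv cs c2 -> deriv cs (c1.1 + c2.1, c1.2 + c2.2)
| Dscale t c : 0 <= t -> deriv cs c -> deriv cs ([ffun i => t * c.1 i], t * c.2)
| Dweak c b : deriv cs c -> c.2 <= b -> deriv cs (c.1, b).

Lemma deriv_eq (J : finType) (cs : J -> cstr) c c' : deriv cs c -> c = c' -> deriv cs c'.
Proof. by move=> h <-. Qed.

Lemma deriv_trans (J J' : finType) (cs : J -> cstr) (cs' : J' -> cstr) c :
  (forall j, deriv cs (cs' j)) -> deriv cs' c -> deriv cs c.
Proof.
move=> H; elim=> {c}.
- by [].
- by move=> c1 c2 _ h1 _ h2; apply: Dadd.
- by move=> t c t0 _ h; apply: Dscale.
- by move=> c b _ h hb; apply: Dweak.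
Qed.

Lemma deriv_sound (J : finType) (cs : J -> cstr) y c :
  (forall j, satc y (cs j)) -> deriv cs c -> satc y c.
Proof.
move=> H; elim=> {c}; rewrite /satc /=.
- by move=> j; apply: H.
- move=> c1 c2 _ h1 _ h2.
  under eq_bigr do rewrite ffunE mulrDl.
  by rewrite big_split /=; apply: lerD.
- move=> t c t0 _ h.
  under eq_bigr do rewrite ffunE -mulrA.
  by rewrite -mulr_sumr; apply: ler_wpM2l.
- move=> c b _ h hb; exact: le_trans h hb.
Qed.

Lemma deriv_explicit (J : finType) (cs : J -> cstr) c : deriv cs c ->
  exists u : J -> R, (forall j, 0 <= u j) /\
    (forall i, c.1 i = \sum_j u j * (cs j).1 i) /\
    \sum_j u j * (cs j).2 <= c.2.
Proof.
elim=> {c}.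
- move=> j; exists (fun k => (k == j)%:R); split; first by move=> k; rewrite ler0n.
  split.
  + move=> i; rewrite (bigD1 j) //= eqxx mul1r big1 ?addr0 // => k /negbTE ->.
    by rewrite mul0r.
  + rewrite (bigD1 j) //= eqxx mul1r big1 ?addr0 // => k /negbTE ->.
    by rewrite mul0r.
- move=> c1 c2 _ [u1 [h1 [e1 l1]]] _ [u2 [h2 [e2 l2]]].
  exists (fun k => u1 k + u2 k); split; first by move=> k; rewrite addr_ge0.
  split.
  + move=> i; rewrite /= ffunE e1 e2 -big_split /=.
    by apply: eq_bigr => k _; rewrite mulrDl.
  + rewrite /=; under eq_bigr do rewrite mulrDl.
    by rewrite big_split /=; apply: lerD.
- move=> t c t0 _ [u [h [e l]]].
  exists (fun k => t * u k); split; first by move=> k; rewrite mulr_ge0.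
  split.
  + move=> i; rewrite /= ffunE e mulr_sumr.
    by apply: eq_bigr => k _; rewrite mulrA.
  + rewrite /=; under eq_bigr do rewrite -mulrA.
    by rewrite -mulr_sumr; apply: ler_wpM2l.
- move=> c b _ [u [h [e l]]] hb; exists u; split=> //; split=> //.
  exact: le_trans l hb.
Qed.

Definition feasible (J : finType) (cs : J -> cstr) := exists y, forall j, satc y (cs j).
Definition certif (J : finType) (cs : J -> cstr) := exists b, b < 0 /\ deriv cs (0, b).

Lemma finmax (T : finType) (P : pred T) (f : T -> R) :
  (exists j, P j) -> exists j, P j /\ forall k, P k -> f k <= f j.
Proof.
move=> [j0 Pj0].
case: (arg_maxP f Pj0) => j Pj Hj.
by exists j; split.
Qed.

Lemma finmin (T : finType) (P : pred T) (f : T -> R) :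
  (exists j, P j) -> exists j, P j /\ forall k, P k -> f j <= f k.
Proof.
move=> h; have [j [Pj Hj]] := finmax (fun k => - f k) h.
by exists j; split=> // k Pk; rewrite -lerN2; apply: Hj.
Qed.

End Farkas.
Section FM.
Variable R : realFieldType.
Variable I : finType.

Lemma FM0 (J : finType) (cs : J -> cstr R I) :
  (forall j i, (cs j).1 i = 0) -> feasible cs \/ certif cs.
Proof.
move=> h0; case: (boolP [forall j, 0 <= (cs j).2]).
- move/forallP => h; left; exists 0 => j; rewrite /satc big1 //.
  by move=> i _; rewrite ffunE mulr0.
- rewrite negb_forall => /existsP [j hj]; right; exists (cs j).2; split.
    by rewrite ltNge.
  apply: deriv_eq (Dax cs j) _; rewrite [cs j]surjective_pairing; congr pair.
  by apply/ffunP => i; rewrite ffunE h0.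
Qed.

Lemma LU_le (ap aq rp rq bp bq X Y : R) : 0 < ap -> aq < 0 ->
  bq - rq = aq * X -> bp - rp = ap * Y ->
  - aq * rp + ap * rq <= - aq * bp + ap * bq -> X <= Y.
Proof.
move=> hap haq e1 e2 H; rewrite leNgt; apply/negP => hYX.
have hpos : 0 < ap * (- aq) * (X - Y).
  by rewrite !mulr_gt0 // ?oppr_gt0 // subr_gt0.
have e3 : - aq * bp + ap * bq - (- aq * rp + ap * rq) = - aq * (bp - rp) + ap * (bq - rq) by ring.
rewrite e1 e2 in e3.
have e4 : - aq * (ap * Y) + ap * (aq * X) = - (ap * (- aq) * (X - Y)) by ring.
rewrite e4 in e3.
have : 0 <= - aq * bp + ap * bq - (- aq * rp + ap * rq) by rewrite subr_ge0.
by rewrite e3 oppr_ge0 leNgt hpos.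
Qed.

Lemma FM k : forall (J : finType) (cs : J -> cstr R I) (S : {set I}), (#|S| <= k)%N ->
  (forall j i, i \notin S -> (cs j).1 i = 0) -> feasible cs \/ certif cs.
Proof.
elim: k => [|k IH] J cs S hS hsupp.
  apply: FM0 => j i; apply: hsupp.
  by move: hS; rewrite leqn0 cards_eq0 => /eqP ->; rewrite in_set0.
case: (set_0Vmem S) => [Se | [i0 hi0]].
  by apply: FM0 => j i; apply: hsupp; rewrite Se in_set0.
pose a j := (cs j).1 i0.
pose alpha p q := if (0 < a p) && (a q < 0) then - a q else if a p == 0 then 1 else 0.
pose beta p q := if (0 < a p) && (a q < 0) then a p else 0.
have alpha_ge0 p q : 0 <= alpha p q.
  rewrite /alpha; case: ifP => [/andP [_ h]|_]; first by rewrite oppr_ge0 ltW.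
  by case: ifP.
have beta_ge0 p q : 0 <= beta p q.
  by rewrite /beta; case: ifP => [/andP [h _]|_] //; rewrite ltW.
pose cs' (pq : J * J) : cstr R I :=
  ([ffun i => alpha pq.1 pq.2 * (cs pq.1).1 i + beta pq.1 pq.2 * (cs pq.2).1 i],
   alpha pq.1 pq.2 * (cs pq.1).2 + beta pq.1 pq.2 * (cs pq.2).2).
have hder : forall pq, deriv cs (cs' pq).
  move=> [p q]; apply: deriv_eq.
    apply: Dadd; [apply: (Dscale (alpha_ge0 p q) (Dax cs p))|
                  apply: (Dscale (beta_ge0 p q) (Dax cs q))].
  by rewrite /cs' /=; congr pair; apply/ffunP => i; rewrite !ffunE.
have hS' : (#|S :\ i0| <= k)%N.
  by move: hS; rewrite (cardsD1 i0 S) hi0.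
have hsupp' : forall pq i, i \notin S :\ i0 -> (cs' pq).1 i = 0.
  move=> [p q] i; rewrite in_setD1 negb_and negbK => /orP [/eqP -> | hi].
    rewrite ffunE /= /alpha /beta -/(a p) -/(a q).
    case: ifP => [_|]; first by ring.
    case: ifP => [/eqP -> _|_ _]; by ring.
  by rewrite ffunE /= !hsupp // !mulr0 addr0.
case: (IH _ cs' _ hS' hsupp') => [[y hy] | [b [hb hd]]]; last first.
  by right; exists b; split=> //; apply: deriv_trans hd.
left.
pose rest j := \sum_i (cs j).1 i * y i - a j * y i0.
have hsum j : \sum_i (cs j).1 i * y i = rest j + a j * y i0.
  by rewrite /rest subrK.
pose L q := ((cs q).2 - rest q) / a q.
pose U p := ((cs p).2 - rest p) / a p.
have hL q : a q < 0 -> (cs q).2 - rest q = a q * L q.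
  by move=> h; rewrite /L mulrC divfK // lt_eqF.
have hU p : 0 < a p -> (cs p).2 - rest p = a p * U p.
  by move=> h; rewrite /U mulrC divfK // gt_eqF.
have Hpq p q : 0 < a p -> a q < 0 -> L q <= U p.
  move=> hp hq; apply: (LU_le hp hq (hL q hq) (hU p hp)).
  have := hy (p, q); rewrite /satc /cs' /=.
  under eq_bigr do rewrite ffunE mulrDl -!mulrA.
  rewrite big_split /= -!mulr_sumr !hsum /alpha /beta hp hq /=.
  move=> H; have e : - a q * (rest p + a p * y i0) + a p * (rest q + a q * y i0) =
     - a q * rest p + a p * rest q by ring.
  by rewrite -e.
have [t [Ht1 Ht2]] : exists t, (forall q, a q < 0 -> L q <= t) /\ (forall p, 0 < a p -> t <= U p).
  case: (boolP [exists q, a q < 0]) => [/existsP hq | hq].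
    have [qs [hqs Hqs]] := @finmax R J (fun q => a q < 0) L hq.
    by exists (L qs); split=> // p hp; apply: Hpq.
  case: (boolP [exists p, 0 < a p]) => [/existsP hp | hp].
    have [ps [hps Hps]] := @finmin R J (fun p => 0 < a p) U hp.
    exists (U ps); split=> // q hq0; exfalso; move: hq; rewrite negb_exists.
    by move/forallP/(_ q); rewrite hq0.
  exists 0; split=> [q hq0|p hp0]; exfalso.
    by move: hq; rewrite negb_exists => /forallP/(_ q); rewrite hq0.
  by move: hp; rewrite negb_exists => /forallP/(_ p); rewrite hp0.
exists [ffun i => if i == i0 then t else y i] => j.
have hsumt : \sum_i (cs j).1 i * [ffun i => if i == i0 then t else y i] i = rest j + a j * t.
  rewrite (bigD1 i0) //= ffunE eqxx /rest (bigD1 i0 (P := predT)) //=.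
  rewrite (eq_bigr (fun i => (cs j).1 i * y i)); last first.
    by move=> i /negbTE hi; rewrite ffunE hi.
  rewrite /a; ring.
rewrite /satc hsumt.
case: (ltgtP (a j) 0) => hj.
- have := Ht1 j hj => hLt.
  have e := hL j hj.
  have : a j * t <= a j * L j by rewrite ler_wnM2l // ltW.
  move=> h1; rewrite -(subrK (rest j) ((cs j).2)) e addrC; by apply: lerD.
- have := Ht2 j hj => hUt.
  have e := hU j hj.
  have : a j * t <= a j * U j by rewrite ler_wpM2l // ltW.
  move=> h1; rewrite -(subrK (rest j) ((cs j).2)) e addrC; by apply: lerD.
- have := hy (j, j); rewrite /satc /cs' /=.
  under eq_bigr do rewrite ffunE.
  rewrite /alpha /beta hj ltxx eqxx /=.
  under eq_bigr do rewrite mul0r addr0 mul1r.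
  rewrite hsum hj !mul0r !addr0 mul1r.
  by [].
Qed.

Lemma farkas (J : finType) (cs : J -> cstr R I) : feasible cs \/ certif cs.
Proof. by apply: (@FM #|[set: I]| J cs [set: I]) => // j i; rewrite in_setT. Qed.

End FM.
Section Walks.
Variable n : nat.
Local Notation V := 'I_n.

Definition prs (u : V) (r : seq V) := zip (u :: r) r.
Definition ecnt (e : edge n) (ps : seq (V * V)) :=
  count (fun p : V * V => val e == [set p.1; p.2]) ps.
Definition cover (r : seq V) := forall v : V, v \in r.

Lemma prs_cons u v r : prs u (v :: r) = (u, v) :: prs v r.
Proof. by []. Qed.

Lemma prs_nil u : prs u [::] = [::].
Proof. by []. Qed.

Lemma prs_cat u r1 r2 : prs u (r1 ++ r2) = prs u r1 ++ prs (last u r1) r2.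
Proof.
elim: r1 u => [|v r1 IH] u //=.
by rewrite !prs_cons IH.
Qed.

Lemma zip_rcons_prs h s c : zip (h :: s) (rcons s c) = prs h (rcons s c).
Proof.
elim: s h => [|v s IH] h //=.
by rewrite IH.
Qed.

Lemma cyc_prs u s : zip (u :: s) (rot 1 (u :: s)) = prs u (rcons s u).
Proof. by rewrite rot1_cons zip_rcons_prs. Qed.

Lemma prs_rev u r :
  prs (last u r) (rev (belast u r)) = rev (map (fun p : V * V => (p.2, p.1)) (prs u r)).
Proof.
elim: r u => [|v r IH] u //=.
rewrite rev_cons -cats1 prs_cat IH.
have -> : last (last v r) (rev (belast v r)) = v.
  by case: r {IH} => [|w r] //=; rewrite rev_cons last_rcons.
by rewrite prs_cons /= rev_cons cats1.
Qed.

Definition swapinv (P : pred (V * V)) := forall p : V * V, P (p.2, p.1) = P p.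

Lemma count_swap (P : pred (V * V)) ps : swapinv P ->
  count P (rev (map (fun p : V * V => (p.2, p.1)) ps)) = count P ps.
Proof.
move=> h; rewrite count_rev count_map; apply: eq_count => p /=.
by rewrite /preim /= h.
Qed.

Lemma ecnt_swapinv (e : edge n) : swapinv (fun p : V * V => val e == [set p.1; p.2]).
Proof. by move=> [a b] /=; rewrite setUC. Qed.

Lemma prs_split u r a b : (a, b) \in prs u r ->
  exists r1 r2, r = r1 ++ b :: r2 /\ last u r1 = a.
Proof.
elim: r u => [|v r IH] u //=.
rewrite prs_cons in_cons => /orP [/eqP [-> ->] | h].
  by exists [::], r.
have [r1 [r2 [-> <-]]] := IH _ h.
by exists (v :: r1), r2.
Qed.

Lemma prs_mem u r p : p \in prs u r -> p.1 \in u :: r /\ p.2 \in r.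
Proof.
case: p => a b /prs_split [r1 [r2 [-> <-]]]; split=> /=.
  have := mem_last u r1; rewrite !inE => /orP [->//|h].
  by rewrite mem_cat h orbT.
by rewrite mem_cat in_cons eqxx orbT.
Qed.

Lemma rot_walk u r1 r2 : last u (r1 ++ r2) = u ->
  let z := last u r1 in
  [/\ last z (r2 ++ r1) = z, perm_eq (prs u (r1 ++ r2)) (prs z (r2 ++ r1))
    & perm_eq (r1 ++ r2) (r2 ++ r1)].
Proof.
move=> hc z; rewrite last_cat in hc.
split.
- by rewrite last_cat hc.
- by rewrite !prs_cat hc perm_catC.
- by rewrite perm_catC.
Qed.

Lemma not_uniq_split (s : seq V) : ~~ uniq s -> exists r1 k r2, s = r1 ++ k :: r2 /\ k \in r2.
Proof.
elim: s => [|v s IH] //=.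
rewrite negb_and negbK => /orP [h | h].
  by exists [::], v, s.
have [r1 [k [r2 [-> hk]]]] := IH h.
by exists (v :: r1), k, r2.
Qed.

Lemma next_at_in (v y0 y : V) s : v \in y :: s ->
  (v, next_at v y0 y s) \in zip (y :: s) (rcons s y0).
Proof.
elim: s y => [|z s IH] y /=.
  by rewrite inE => /eqP ->; rewrite eqxx inE.
case: (eqVneq v y) => [-> _|hne]; first exact: mem_head.
rewrite in_cons (negbTE hne) /= => h.
by rewrite in_cons IH // orbT.
Qed.

Lemma next_in_prs (u : V) r v : last u r = u -> v \in r ->
  (v, next r v) \in prs u r.
Proof.
case: r => [|y s] // hc hv.
have := next_at_in y hv; rewrite zip_rcons_prs -cats1 prs_cat /= mem_cat.
rewrite /= in hc; rewrite hc.
case/orP => h; first by rewrite prs_cons in_cons h orbT.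
by rewrite prs_cons in_cons; move: h; rewrite inE => ->.
Qed.

End Walks.
Section Shortcut.
Variable R : realFieldType.
Variable n : nat.
Local Notation V := 'I_n.

Definition sc (t : V * V * V) (e : edge n) : R :=
  (val e == [set t.1.1; t.2])%:R + (val e == [set t.1.2; t.2])%:R
  - (val e == [set t.1.1; t.1.2])%:R.
Definition dtri (t : V * V * V) := [&& t.1.1 != t.1.2, t.1.1 != t.2 & t.1.2 != t.2].
Definition pdist (p : V * V) := p.1 != p.2.

Lemma last_in (a : V) r : r != [::] -> last a r \in r.
Proof. by case: r => [|c r] //= _; apply: mem_last. Qed.

Lemma shortcut (u : V) r : last u r = u -> cover r -> all pdist (prs u r) ->
  exists u' r' tl, [/\ last u' r' = u', cover r', uniq r', all dtri tl &
   forall e, (ecnt e (prs u' r'))%:R + \sum_(t <- tl) sc t e <= (ecnt e (prs u r))%:R].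
Proof.
move: {2}(size r) (leqnn (size r)) => m; elim: m u r => [|m IH] u r.
  rewrite leqn0 => /nilP -> _ hcov; by have := hcov u.
move=> hs hc hcov hd.
case: (boolP (uniq r)) => hu.
  exists u, r, [::]; split=> // e; by rewrite big_nil addr0.
have [r1 [k [r2 [er hk]]]] := not_uniq_split hu.
rewrite er in hc; have [hc' hp hpr] := rot_walk hc.
set a := last u r1 in hc' hp hpr.
case e0 : (r2 ++ r1) => [|b r0]; first by move: (mem_cat k r2 r1); rewrite e0 hk.
have ek : (k :: r2) ++ r1 = k :: b :: r0 by rewrite /= e0.
rewrite ek in hc' hp hpr.
have hcov' : cover [:: k, b & r0].
  by move=> v; rewrite -(perm_mem hpr) -er.
have hd' : all pdist (prs a [:: k, b & r0]).
  by rewrite -(perm_all _ hp) -er.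
have hkin : k \in b :: r0 by rewrite -e0 mem_cat hk.
have hcnt : forall e, ecnt e (prs u r) = ecnt e (prs a [:: k, b & r0]).
  by move=> e; rewrite er; apply/permP.
move: hd'; rewrite !prs_cons /= => /and3P [hak hkb hd0].
rewrite /pdist /= in hak hkb.
case: (eqVneq a b) => hab.
- rewrite -hab in hkb hd0 hcov' hc' hcnt hkin.
  have hr0 : r0 != [::] by apply/eqP => e1; move: hkin; rewrite e1 inE eq_sym (negbTE hak).
  have hc0 : last a r0 = a by [].
  have hcov0 : cover r0.
    move=> v; have := hcov' v; rewrite !inE => /or3P [/eqP ->| /eqP ->|//].
      by move: hkin; rewrite inE eq_sym (negbTE hak).
    by rewrite -{1}hc0; apply: last_in.
  have hs0 : (size r0 <= m)%N.
    move: hs; rewrite er size_cat /= => hs.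
    have h2 := congr1 size e0; rewrite size_cat /= in h2.
    clear -hs h2; lia.
  have [u' [r' [tl [h1 h2 h3 h4 h5]]]] := IH a r0 hs0 hc0 hcov0 hd0.
  exists u', r', tl; split=> // e; apply: (le_trans (h5 e)).
  by rewrite ler_nat hcnt /ecnt !prs_cons /= addnA leq_addl.
- have hs0 : (size (b :: r0) <= m)%N.
    move: hs; rewrite er size_cat /= => hs.
    have h2 := congr1 size e0; rewrite size_cat /= in h2.
    clear -hs h2; lia.
  have hc0 : last a (b :: r0) = a by [].
  have hcov0 : cover (b :: r0).
    move=> v; have := hcov' v; rewrite !inE => /orP [/eqP ->|//].
    by move: hkin; rewrite inE.
  have hd0' : all pdist (prs a (b :: r0)) by rewrite prs_cons /= hd0 andbT; exact: hab.
  have [u' [r' [tl [h1 h2 h3 h4 h5]]]] := IH a (b :: r0) hs0 hc0 hcov0 hd0'.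
  exists u', r', ((a, b, k) :: tl); split=> //.
    by rewrite /= h4 andbT /dtri /= hab hak eq_sym hkb.
  move=> e; rewrite big_cons.
  have key : (ecnt e (prs a (b :: r0)))%:R + sc ((a, b, k) : V * V * V) e = (ecnt e (prs a [:: k, b & r0]))%:R :> R.
    rewrite /ecnt !prs_cons /= /sc /= !natrD (setUC [set k] [set b]); ring.
  rewrite hcnt -key addrCA [X in X <= _]addrC; apply: lerD => //; exact: h5.
Qed.

End Shortcut.
Section Metric.
Variable R : realFieldType.
Variable n : nat.
Local Notation V := 'I_n.
Variable x : edge n -> R.
Variable c : edge n -> R.
Hypothesis hc0 : forall e, 0 <= c e.

Definition spp (p : V * V) := [exists e : edge n, (val e == [set p.1; p.2]) && (0 < x e)].
Definition pcost (ps : seq (V * V)) : R := \sum_e (ecnt e ps)%:R * c e.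

Lemma spp_swapinv : swapinv spp.
Proof. by move=> [a b]; rewrite /spp /= setUC. Qed.

Lemma pcost_cat ps1 ps2 : pcost (ps1 ++ ps2) = pcost ps1 + pcost ps2.
Proof.
rewrite /pcost -big_split /=; apply: eq_bigr => e _.
by rewrite /ecnt count_cat natrD mulrDl.
Qed.

Lemma pcost_nil : pcost [::] = 0.
Proof. by rewrite /pcost big1 // => e _; rewrite mul0r. Qed.

Lemma pcost_ge0 ps : 0 <= pcost ps.
Proof. by apply: sumr_ge0 => e _; rewrite mulr_ge0 ?ler0n. Qed.

Lemma pcost_le ps1 ps2 : (forall e, (ecnt e ps1 <= ecnt e ps2)%N) -> pcost ps1 <= pcost ps2.
Proof.
move=> h; apply: ler_sum => e _; apply: ler_wpM2r => //.
by rewrite ler_nat.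
Qed.

Lemma pcost_subseq ps1 ps2 : subseq ps1 ps2 -> pcost ps1 <= pcost ps2.
Proof. by move=> h; apply: pcost_le => e; apply: leq_count_subseq. Qed.

Lemma pcost_swap ps : pcost (rev (map (fun p : V * V => (p.2, p.1)) ps)) = pcost ps.
Proof. by apply: eq_bigr => e _; rewrite /ecnt count_swap //; apply: ecnt_swapinv. Qed.

Lemma shorten_walk (r : seq V) (u : V) : exists r', [/\ last u r' = last u r, uniq (u :: r'),
  subseq (prs u r') (prs u r) & {subset r' <= r}].
Proof.
move: {2}(size r) (leqnn (size r)) => m; elim: m r u => [|m IH] r u.
  by rewrite leqn0 => /nilP ->; exists [::].
move=> hs.
case: (boolP (u \in r)) => hu.
  case/splitPr: hu hs => r1 r2 hs.
  have hs2 : (size r2 <= m)%N by move: hs; rewrite size_cat /=; lia.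
  have [r' [h1 h2 h3 h4]] := IH r2 u hs2.
  exists r'; split=> //.
  - by rewrite h1 last_cat.
  - rewrite prs_cat prs_cons; apply: (subseq_trans h3).
    apply: (subseq_trans (subseq_cons _ (last u r1, u))); exact: suffix_subseq.
  - by move=> z /h4 hz; rewrite mem_cat in_cons hz !orbT.
case: r hu hs => [|v r0] hu hs; first by exists [::].
have hs0 : (size r0 <= m)%N by [].
have [r' [h1 h2 h3 h4]] := IH r0 v hs0.
exists (v :: r'); split=> //.
- apply/andP; split; last exact: h2.
  apply/negP => hin; move: hu; rewrite in_cons.
  move: hin; rewrite in_cons => /orP [->//|/h4 ->]; by rewrite orbT.
- by rewrite !prs_cons /= eqxx.
- by move=> z; rewrite !in_cons => /orP [->//|/h4 ->]; rewrite orbT.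
Qed.

Definition Ix := ('I_n.+1 * n.-tuple V)%type.
Definition path_of (kt : Ix) : seq V := take kt.1 kt.2.

Lemma repr_path (r : seq V) (u : V) : (size r <= n)%N -> exists kt : Ix, path_of kt = r.
Proof.
move=> hr.
have hsz : size (take n (r ++ nseq n u)) == n.
  by rewrite size_take size_cat size_nseq; case: ifP => //; lia.
exists (Ordinal (hr : (size r < n.+1)%N), Tuple hsz).
by rewrite /path_of /= take_takel // take_size_cat.
Qed.

Definition okp (u v : V) (r : seq V) := (last u r == v) && all spp (prs u r).
Definition Fc (u : V) (kt : Ix) := pcost (prs u (path_of kt)).

Definition dist (u v : V) : R :=
  match [pick kt | okp u v (path_of kt)] with
  | Some kt0 => Num.min 1 (Fc u ([arg min_(kt < kt0 | okp u v (path_of kt)) Fc u kt])%O)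
  | None => 1
  end.

Lemma dist_le1 u v : dist u v <= 1.
Proof. by rewrite /dist; case: pickP => // kt0 _; rewrite ge_min lexx. Qed.

Lemma dist_ge0 u v : 0 <= dist u v.
Proof.
rewrite /dist; case: pickP => // kt0 _; rewrite le_min ler01; exact: pcost_ge0.
Qed.

Lemma dist_le_kt u v kt : okp u v (path_of kt) -> dist u v <= Fc u kt.
Proof.
move=> hk; rewrite /dist; case: pickP => [kt0 h0|]; last by move/(_ kt); rewrite hk.
case: (arg_minP (P := fun kt => okp u v (path_of kt)) (Fc u) h0) => kt1 h1 Hm.
by rewrite ge_min Hm // orbT.
Qed.

Lemma dist_lt1 u v : dist u v < 1 -> exists r, okp u v r /\ pcost (prs u r) = dist u v.
Proof.
rewrite /dist; case: pickP => [kt0 h0|]; last by rewrite ltxx.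
case: (arg_minP (P := fun kt => okp u v (path_of kt)) (Fc u) h0) => kt1 h1 Hm.
rewrite gt_min ltxx /= => hlt.
exists (path_of kt1); split=> //.
by apply/esym/min_idPr; apply: ltW.
Qed.

Lemma size_uniq_le (u : V) r : uniq (u :: r) -> (size r <= n)%N.
Proof.
move=> h; have := max_card (mem (u :: r)); rewrite (card_uniqP h) card_ord /=.
lia.
Qed.

Lemma dist_le_path u v r : okp u v r -> dist u v <= pcost (prs u r).
Proof.
move=> /andP [/eqP hl ha].
have [r' [h1 h2 h3 h4]] := shorten_walk r u.
have [kt hkt] := repr_path u (size_uniq_le h2).
apply: (le_trans (dist_le_kt (kt := kt) _)).
  rewrite /okp hkt h1 hl eqxx /=; apply/allP => p hp.
  by move/allP: ha; apply; apply: (mem_subseq h3).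
by rewrite /Fc hkt; apply: pcost_subseq.
Qed.

Lemma last_rev_belast (u : V) r : last (last u r) (rev (belast u r)) = u.
Proof. by case: r => [|w r] //=; rewrite rev_cons last_rcons. Qed.

Lemma dist_sym_le u v : dist u v <= dist v u.
Proof.
case: (ltP (dist v u) 1) => h; last exact: le_trans (dist_le1 _ _) h.
have [r [/andP [/eqP hl ha] hc]] := dist_lt1 h.
rewrite -hc -pcost_swap -prs_rev hl.
apply: dist_le_path; apply/andP; split; first by rewrite -{1}hl last_rev_belast.
rewrite -hl prs_rev all_rev all_map; apply/allP => p hp /=.
by rewrite /preim /= spp_swapinv; move/allP: ha; apply.
Qed.

Lemma dist_sym u v : dist u v = dist v u.
Proof. by apply/eqP; rewrite eq_le !dist_sym_le. Qed.

Lemma dist_tri u v k : dist u v <= dist u k + dist k v.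
Proof.
case: (ltP (dist u k) 1) => h1; last first.
  apply: (le_trans (dist_le1 _ _)); apply: (le_trans h1).
  by rewrite lerDl dist_ge0.
case: (ltP (dist k v) 1) => h2; last first.
  apply: (le_trans (dist_le1 _ _)); apply: (le_trans h2).
  by rewrite lerDr dist_ge0.
have [r1 [/andP [/eqP l1 a1] c1]] := dist_lt1 h1.
have [r2 [/andP [/eqP l2 a2] c2]] := dist_lt1 h2.
rewrite -c1 -c2.
have -> : pcost (prs u r1) + pcost (prs k r2) = pcost (prs u (r1 ++ r2)).
  by rewrite prs_cat l1 pcost_cat.
apply: dist_le_path.
by rewrite /okp last_cat l1 l2 eqxx /= prs_cat l1 all_cat a1 a2.
Qed.

Lemma pcost_single (e : edge n) (a b : V) : val e = [set a; b] -> pcost [:: (a, b)] = c e.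
Proof.
move=> he; rewrite /pcost (bigD1 e) //= /ecnt /= he eqxx /= mul1r big1 ?addr0 //.
move=> e' hne; rewrite -he; case: eqP => [h|_]; last by rewrite mul0r.
by move: hne; rewrite (val_inj h) eqxx.
Qed.

Lemma dist_edge (e : edge n) (a b : V) : 0 < x e -> val e = [set a; b] -> dist a b <= c e.
Proof.
move=> hx he; rewrite -(pcost_single he).
apply: (@dist_le_path a b [:: b]).
rewrite /okp /= eqxx /= andbT; apply/existsP; exists e; by rewrite he eqxx hx.
Qed.

End Metric.
Ltac brute :=
  repeat (match goal with
  | H : is_true (?x != ?x) |- _ => by rewrite eqxx in H
  | |- context [?x == ?x] => rewrite eqxx
  | H : is_true (?x != ?y) |- context [?x == ?y] => rewrite (negbTE H)
  | H : is_true (?x != ?y) |- context [?y == ?x] => rewrite eq_sym (negbTE H)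
  | |- context [?x == ?y] => case: (eqVneq x y) => [?|?]; subst
  end; rewrite /=).

Section Delta.
Variable R : realFieldType.
Variable n : nat.
Local Notation V := 'I_n.

Lemma set2eq (x y p q : V) :
  ([set x; y] == [set p; q]) = ((x == p) && (y == q)) || ((x == q) && (y == p)).
Proof.
apply/eqP/idP => [E | ].
  have hx : x \in [set p; q] by rewrite -E !inE eqxx.
  have hy : y \in [set p; q] by rewrite -E !inE eqxx orbT.
  have hp : p \in [set x; y] by rewrite E !inE eqxx.
  have hq : q \in [set x; y] by rewrite E !inE eqxx orbT.
  by move: hx hy hp hq; rewrite !inE; brute.
move=> /orP [] /andP [/eqP -> /eqP ->] //; apply: setUC.
Qed.

Definition Aop (L : {set V} -> V -> R) (i j : V) : R :=
  \sum_(k | k \notin [set i; j]) (- L [set i; j] k + L [set i; k] j + L [set j; k] i).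

Definition Dl (S0 : {set V}) (k0 : V) : {set V} -> V -> R :=
  fun S k => ((S == S0) && (k == k0))%:R.

Lemma sum_pred1 (P : pred V) (c : V) : \sum_(k | P k) ((k == c)%:R : R) = (P c)%:R.
Proof.
case: (boolP (P c)) => hc.
  rewrite (bigD1 c) //= eqxx big1 ?addr0 // => k /andP [_ /negbTE ->] //.
rewrite big1 // => k hk; case: eqP => // ek; by move: hc; rewrite -ek hk.
Qed.

Lemma Aop_delta (a b k i j : V) : a != b -> a != k -> b != k -> i != j ->
  Aop (Dl [set a; b] k) i j =
  ([set i; j] == [set a; k])%:R + ([set i; j] == [set b; k])%:R - ([set i; j] == [set a; b])%:R.
Proof.
move=> hab hak hbk hij.
pose X : R := - ([set i; j] == [set a; b])%:R.
pose Y : R := ((j == k) && (i == a))%:R + ((i == k) && (j == a))%:R.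
pose Z : R := ((j == k) && (i == b))%:R + ((i == k) && (j == b))%:R.
rewrite /Aop /Dl.
rewrite (eq_bigr (fun k' => (k' == k)%:R * X + (k' == b)%:R * Y + (k' == a)%:R * Z)); last first.
  move=> k' _; rewrite /X /Y /Z !set2eq; brute; ring.
rewrite !big_split /= -!mulr_suml !sum_pred1 /X /Y /Z !set2eq !inE.
brute; ring.
Qed.

End Delta.
Ltac orsolve := let h := fresh in move=> h; repeat (case/orP: h => h); rewrite ?h ?orbT //.

Section Reduce.
Variable n : nat.
Local Notation V := 'I_n.

Lemma last_in' (a : V) r : r != [::] -> last a r \in r.
Proof. by case: r => [|c r] //= _; apply: mem_last. Qed.

Lemma last_ne_nil (a b : V) r : last b r = a -> a != b -> a \in r.
Proof.
move=> hl hab; have hr : r != [::] by apply/eqP => e; move: hab; rewrite -hl e /= eqxx.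
by rewrite -hl; apply: last_in'.
Qed.

Definition ccount (P : pred (V * V)) u W := count P (prs u W).

Lemma shape1 (a b : V) R1 R3 R4 : a != b -> last b R1 = b -> last b R4 = a ->
  let W := b :: R1 ++ a :: R3 ++ b :: R4 in
  let W' := R3 ++ b :: R1 ++ R4 in
  [/\ last a W' = a, {subset W <= W'}, (size W' < size W)%N &
      forall P, (count P (prs a W') <= count P (prs a W))%N].
Proof.
move=> hab h1 h4 W W'; split.
- by rewrite /W' last_cat /= last_cat h1.
- have ha : a \in R4 by apply: last_ne_nil h4 hab.
  move=> v; rewrite /W /W' !(in_cons, mem_cat).
  case: (eqVneq v a) => [->|_]; first by rewrite ha !orbT.
  orsolve.
- by rewrite /W /W' /=; repeat rewrite size_cat /=; lia.
- move=> P; rewrite /W /W'; do 5 (rewrite ?prs_cat ?prs_cons ?count_cat ?h1 /=); lia.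
Qed.

Lemma shape1' (a b : V) R3 R4 R2 : a != b -> last a R4 = b -> last a R2 = a ->
  let W := b :: (R3 ++ a :: R4) ++ a :: R2 in
  let W' := R3 ++ a :: R2 ++ R4 in
  [/\ last b W' = b, {subset W <= W'}, (size W' < size W)%N &
      forall P, (count P (prs b W') <= count P (prs a W))%N].
Proof.
move=> hab h4 h2 W W'; split.
- by rewrite /W' last_cat /= last_cat h2.
- have hb : b \in R4 by apply: last_ne_nil h4 _; rewrite eq_sym.
  move=> v; rewrite /W /W' !(in_cons, mem_cat).
  case: (eqVneq v b) => [->|_]; first by rewrite hb !orbT.
  orsolve.
- by rewrite /W /W' /=; repeat rewrite size_cat /=; lia.
- move=> P; rewrite /W /W' -catA; do 5 (rewrite ?prs_cat ?prs_cons ?count_cat ?h4 ?h2 /=); lia.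
Qed.

Lemma shape2 (a b : V) X1 X2 X3 : a != b -> last b X1 = a -> last b X2 = a -> last b X3 = a ->
  let W := b :: X1 ++ b :: X2 ++ b :: X3 in
  let W' := b :: X1 ++ rev (belast b X2) ++ X3 in
  [/\ last a W' = a, {subset W <= W'}, (size W' < size W)%N &
      forall P, swapinv P -> (count P (prs a W') <= count P (prs a W))%N].
Proof.
move=> hab h1 h2 h3 W W'.
have hlr : last a (rev (belast b X2)) = b.
  by rewrite -{1}h2 last_rev_belast.
split.
- by rewrite /W' /= !last_cat h1 hlr h3.
- have ha : a \in X1 by apply: last_ne_nil h1 hab.
  have hX2 : forall v, v \in X2 -> v \in rev (belast b X2) \/ v = a.
    move=> v hv; have : v \in b :: X2 by rewrite in_cons hv orbT.
    rewrite lastI mem_rcons in_cons h2 => /orP [/eqP ->|hv']; first by right.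
    by left; rewrite mem_rev.
  move=> v; rewrite /W /W' !(in_cons, mem_cat).
  case: (eqVneq v a) => [->|_]; first by rewrite ha !orbT.
  case: (boolP (v \in X2)) => [/hX2 [->|->]|_]; first by rewrite !orbT.
    by rewrite ha !orbT.
  orsolve.
- by rewrite /W /W' /=; repeat rewrite size_cat /=; rewrite size_rev size_belast; lia.
- move=> P hP; rewrite /W /W'.
  have e1 : prs a (rev (belast b X2)) = rev (map (fun p : V * V => (p.2, p.1)) (prs b X2)).
    by rewrite -prs_rev h2.
  do 5 (rewrite ?prs_cat ?prs_cons ?count_cat ?h1 ?h2 ?hlr ?e1 /=).
  rewrite count_swap //; lia.
Qed.

Lemma pair_of_edge (e : edge n) (a b : V) (q : V * V) :
  val e = [set a; b] -> val e == [set q.1; q.2] -> q = (a, b) \/ q = (b, a).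
Proof.
case: q => q1 q2 -> /=; rewrite set2eq => /orP [] /andP [/eqP -> /eqP ->]; by [left|right].
Qed.

Lemma card_set2_neq (a b : V) : #|[set a; b]| == 2 -> a != b.
Proof. by apply: contraTneq => ->; rewrite setUid cards1. Qed.

Lemma count_has (P : pred (V * V)) s : (0 < count P s)%N -> exists2 q, q \in s & P q.
Proof. by rewrite -has_count => /hasP. Qed.

Lemma reduce_rot (a b : V) W3 (e : edge n) : last a (b :: W3) = a -> val e = [set a; b] ->
  (2 < ecnt e (prs a (b :: W3)))%N ->
  exists u' W', [/\ last u' W' = u', {subset b :: W3 <= W'}, (size W' < size (b :: W3))%N &
      forall P, swapinv P -> (count P (prs u' W') <= count P (prs a (b :: W3)))%N].
Proof.
move=> hc he hcnt.
have hab : a != b by apply: card_set2_neq; rewrite -he; exact: (valP e).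
have Pab : (val e == [set (a, b).1; (a, b).2]) by rewrite he.
have Pba : (val e == [set (b, a).1; (b, a).2]) by rewrite he /= setUC.
rewrite /ecnt prs_cons /= Pab /= in hcnt.
case: (boolP ((b, a) \in prs b W3)) => hba.
- have [R1 [R2 [eW3 l1]]] := prs_split hba.
  rewrite eW3 prs_cat l1 prs_cons count_cat /= Pba /= in hcnt.
  have hc2 : last a R2 = a by move: hc; rewrite /= eW3 last_cat l1.
  case: (ltnP 0 (count (fun p : V * V => val e == [set p.1; p.2]) (prs a R2))) => h2.
  + have [q hq Pq] := count_has h2.
    have hb : b \in R2.
      have [hq1 hq2] := prs_mem hq.
      case: (pair_of_edge he Pq) => eq; rewrite eq /= in hq1 hq2 => //.
      by move: hq1; rewrite in_cons eq_sym (negbTE hab).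
    case/splitPr: hb eW3 hc2 => R3 R4 eW3 hc2.
    have h4 : last b R4 = a by move: hc2; rewrite last_cat.
    have [s1 s2 s3 s4] := shape1 R3 hab l1 h4.
    exists a, (R3 ++ b :: R1 ++ R4); split=> //.
    + by rewrite eW3; apply: s2.
    + by rewrite eW3; apply: s3.
    + by move=> P _; rewrite eW3; apply: s4.
  + have h1 : (0 < count (fun p : V * V => val e == [set p.1; p.2]) (prs b R1))%N.
      by move: h2; rewrite leqn0 => /eqP h0; move: hcnt; rewrite h0 /=; lia.
    have [q hq Pq] := count_has h1.
    have ha : a \in R1.
      have [hq1 hq2] := prs_mem hq.
      case: (pair_of_edge he Pq) => eq; rewrite eq /= in hq1 hq2 => //.
      by move: hq1; rewrite in_cons (negbTE hab).
    case/splitPr: ha eW3 l1 => R3 R4 eW3 l1.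
    have h4 : last a R4 = b by move: l1; rewrite last_cat.
    have [s1 s2 s3 s4] := shape1' R3 hab h4 hc2.
    exists b, (R3 ++ a :: R2 ++ R4); split=> //.
    + by rewrite eW3; apply: s2.
    + by rewrite eW3; apply: s3.
    + by move=> P _; rewrite eW3; apply: s4.
- have hnoba : forall q, q \in prs b W3 -> val e == [set q.1; q.2] -> q = (a, b).
    move=> q hq Pq; case: (pair_of_edge he Pq) => // eq.
    by move: hba; rewrite -eq hq.
  have [q hq Pq] := count_has (ltnW hcnt).
  have := hnoba q hq Pq => eq; rewrite eq in hq.
  have [R1 [R2 [eW3 l1]]] := prs_split hq.
  have hcW : forall q, q \in prs b R1 ++ prs b R2 -> q \in prs b W3.
    by move=> q'; rewrite eW3 prs_cat l1 prs_cons !mem_cat in_cons => /orP [->|->]; rewrite ?orbT.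
  move: hcnt; rewrite eW3 prs_cat l1 prs_cons count_cat /= Pab /= => hcnt.
  have hc3 : last b R2 = a by move: hc; rewrite /= eW3 last_cat l1.
  case: (ltnP 0 (count (fun p : V * V => val e == [set p.1; p.2]) (prs b R2))) => h2.
  + have [q' hq' Pq'] := count_has h2.
    have hq'' : q' \in prs b R1 ++ prs b R2 by rewrite mem_cat hq' orbT.
    have eq' := hnoba q' (hcW q' hq'') Pq'.
    rewrite eq' in hq'.
    have [R3 [R4 [eR2 l3]]] := prs_split hq'.
    have h4 : last b R4 = a by move: hc3; rewrite eR2 last_cat l3.
    have [s1 s2 s3 s4] := shape2 hab l1 l3 h4.
    exists a, (b :: R1 ++ rev (belast b R3) ++ R4); split=> //.
    + by rewrite ?eW3 eR2; apply: s2.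
    + by rewrite ?eW3 eR2; apply: s3.
    + by move=> P hP; rewrite ?eW3 eR2; apply: s4.
  + have h1 : (0 < count (fun p : V * V => val e == [set p.1; p.2]) (prs b R1))%N.
      by move: h2; rewrite leqn0 => /eqP h0; move: hcnt; rewrite h0 /=; lia.
    have [q' hq' Pq'] := count_has h1.
    have hq'' : q' \in prs b R1 ++ prs b R2 by rewrite mem_cat hq'.
    have eq' := hnoba q' (hcW q' hq'') Pq'.
    rewrite eq' in hq'.
    have [R3 [R4 [eR1 l3]]] := prs_split hq'.
    have h4 : last b R4 = a by move: l1; rewrite eR1 last_cat l3.
    have [s1 s2 s3 s4] := shape2 hab l3 h4 hc3.
    exists a, (b :: R3 ++ rev (belast b R4) ++ R2); split=> //.
    + by rewrite ?eW3 eR1 -catA; apply: s2.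
    + by rewrite ?eW3 eR1 -catA; apply: s3.
    + by move=> P hP; rewrite ?eW3 eR1 -catA; apply: s4.
Qed.

Lemma reduce (u : V) W : last u W = u -> cover W ->
  exists u' W', [/\ last u' W' = u', cover W', (forall e, ecnt e (prs u' W') <= 2)%N &
      forall P, swapinv P -> (count P (prs u' W') <= count P (prs u W))%N].
Proof.
move: {2}(size W) (leqnn (size W)) => m; elim: m u W => [|m IH] u W.
  rewrite leqn0 => /nilP -> _ hcov; exists u, [::]; split=> //; by move=> e; rewrite /ecnt.
move=> hs hc hcov.
case: (boolP [forall e, (ecnt e (prs u W) <= 2)%N]) => [/forallP h|].
  by exists u, W; split.
rewrite negb_forall => /existsP [e]; rewrite -ltnNge => he.
have [q hq Pq] := count_has (ltnW (ltnW he)).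
case: q hq Pq => a b hq Pq.
have [W1 [W2 [eW l1]]] := prs_split hq.
rewrite eW in hc; have [hc' hp hpr] := rot_walk hc.
rewrite l1 /= in hc' hp hpr.
have he' : val e = [set a; b] by apply/eqP.
have hcnt : (2 < ecnt e (prs a (b :: W2 ++ W1)))%N.
  by move: he; rewrite /ecnt eW; move/permP: hp => ->.
have [u1 [W' [h1 h2 h3 h4]]] := reduce_rot hc' he' hcnt.
have hsW' : (size W' <= m)%N.
  move: h3 hs; rewrite eW /= !size_cat /=; lia.
have hcovW' : cover W'.
  by move=> v; apply: h2; rewrite -(perm_mem hpr) -eW.
have [u2 [W'' [g1 g2 g3 g4]]] := IH u1 W' hsW' h1 hcovW'.
exists u2, W''; split=> // P hP.
apply: (leq_trans (g4 P hP)); apply: (leq_trans (h4 P hP)).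
by rewrite eW; move/permP: hp => ->.
Qed.

End Reduce.
Section Tours.
Variable n : nat.
Local Notation V := 'I_n.

Lemma in_zip1 (p : V * V) s t : p \in zip s t -> p.1 \in s.
Proof.
elim: s t => [|a s IH] [|b t] //=; rewrite in_cons => /orP [/eqP -> |h].
  by rewrite mem_head.
by rewrite in_cons (IH t h) orbT.
Qed.

Lemma zip_next_at (y y0 : V) s p : uniq (y :: s) -> p \in zip (y :: s) (rcons s y0) ->
  p.2 = next_at p.1 y0 y s.
Proof.
elim: s y => [|z s IH] y /=.
  by move=> _; rewrite inE => /eqP -> /=; rewrite eqxx.
move=> /andP [hy hu]; rewrite in_cons => /orP [/eqP -> /=|h]; first by rewrite eqxx.
have h1 := in_zip1 h.
have hne : p.1 != y by apply: contraNneq hy => <-.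
by rewrite (negbTE hne); apply: IH.
Qed.

Lemma zip_next (s : seq V) p : uniq s -> p \in zip s (rot 1 s) -> p.2 = next s p.1.
Proof.
case: s => [|y s] //= hu; rewrite rot1_cons => h.
by apply: zip_next_at.
Qed.

Lemma next_rot3 (s : seq V) v : uniq s -> (2 < size s)%N -> v \in s ->
  next s v != v /\ next s (next s v) != v.
Proof.
move=> hu hs hv; case: (rot_to hv) => i s' hr.
have hu' : uniq (v :: s') by rewrite -hr rot_uniq.
have hs' : (2 < size (v :: s'))%N by rewrite -hr size_rot.
rewrite -!(next_rot i hu) hr.
case: s' hu' hs' {hr} => [|b [|c s'']] //= hu' _.
rewrite eqxx.
move: hu'; rewrite !inE !negb_or => /andP [/and3P [hvb hvc _] /andP [/andP [hbc _] _]].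
rewrite (eq_sym b v) (negbTE hvb) eqxx; split=> //; by rewrite eq_sym.
Qed.

Lemma ecnt_tour_le1 (s : seq V) (e : edge n) : uniq s -> (2 < size s)%N ->
  (ecnt e (zip s (rot 1 s)) <= 1)%N.
Proof.
move=> hu hs.
have [a [b [hab he]]] : exists a b, a != b /\ val e = [set a; b] by apply/cards2P; exact: (valP e).
set ps := zip s (rot 1 s).
have hups : uniq ps.
  apply: (map_uniq (f := fst)); rewrite -/(unzip1 ps) unzip1_zip // size_rot //.
have -> : ecnt e ps = count (predU (pred1 (a, b)) (pred1 (b, a))) ps.
  apply: eq_count => [[p1 p2]]; rewrite he set2eq /= !xpair_eqE; by brute.
have hU := count_predUI (pred1 (a, b)) (pred1 (b, a)) ps.
rewrite !count_uniq_mem // in hU.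
have hle : (((a, b) \in ps) + ((b, a) \in ps) <= 1)%N.
  case: (boolP ((a, b) \in ps)) => hab_in; case: (boolP ((b, a) \in ps)) => hba_in //=.
  exfalso.
  have e1 := zip_next hu hab_in; have e2 := zip_next hu hba_in.
  have ha := in_zip1 hab_in.
  have [_ h] := next_rot3 hu hs ha.
  by move: h; rewrite /= in e1 e2 ha *; rewrite -e1 -e2 eqxx.
by move: hle; rewrite -hU; apply: leq_trans; apply: leq_addr.
Qed.

End Tours.
Section WeakPlus.
Variable R : realFieldType.
Variable n : nat.
Local Notation V := 'I_n.
Local Notation Dl := (@Dl R n).

Lemma Ldecomp (L : {set V} -> V -> R) S k :
  L S k = \sum_S0 \sum_k0 L S0 k0 * Dl S0 k0 S k.
Proof.
rewrite (bigD1 S) //= (bigD1 k (P := predT)) //= /Dl !eqxx mulr1.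
rewrite big1 ?addr0; last first.
  by move=> k0 /negbTE hk; rewrite (eq_sym k) hk andbF mulr0.
rewrite big1 ?addr0 // => S0 /negbTE hS; apply: big1 => k0 _.
by rewrite (eq_sym S) hS mulr0.
Qed.

Lemma Aop_lin (L : {set V} -> V -> R) i j :
  Aop L i j = \sum_S0 \sum_k0 L S0 k0 * Aop (Dl S0 k0) i j.
Proof.
under [RHS]eq_bigr do under eq_bigr do rewrite /Aop mulr_sumr.
rewrite /Aop.
under [RHS]eq_bigr do rewrite exchange_big /=.
rewrite exchange_big /=; apply: eq_bigr => k _.
rewrite (Ldecomp L [set i; j] k) (Ldecomp L [set i; k] j) (Ldecomp L [set j; k] i).
rewrite -!sumrN -!big_split /=; apply: eq_bigr => S0 _.
rewrite -!sumrN -!big_split /=; apply: eq_bigr => k0 _.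
ring.
Qed.

Definition nd (S0 : {set V}) (k0 : V) := (#|S0| == 2) && (k0 \notin S0).

Lemma Aop_degen S0 k0 (i j : V) : i != j -> ~~ nd S0 k0 -> Aop (Dl S0 k0) i j = 0.
Proof.
move=> hij hnd; rewrite /Aop big1 // => k; rewrite !inE negb_or => /andP [hki hkj].
rewrite /Dl.
have hik : i != k by rewrite eq_sym.
have hjk : j != k by rewrite eq_sym.
have hji : j != i by rewrite eq_sym.
have z1 : ([set i; j] == S0) && (k == k0) = false.
  apply/negP => /andP [/eqP ES /eqP Ek]; move: hnd.
  by rewrite /nd -ES -Ek cards2 hij !inE (negbTE hki) (negbTE hkj).
have z2 : ([set i; k] == S0) && (j == k0) = false.
  apply/negP => /andP [/eqP ES /eqP Ek]; move: hnd.
  by rewrite /nd -ES -Ek cards2 hik !inE (negbTE hji) (negbTE hjk).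
have z3 : ([set j; k] == S0) && (i == k0) = false.
  apply/negP => /andP [/eqP ES /eqP Ek]; move: hnd.
  by rewrite /nd -ES -Ek cards2 hjk !inE (negbTE hij) (negbTE hik).
by rewrite z1 z2 z3 /=; ring.
Qed.

End WeakPlus.
Section TourCost.
Variable R : realFieldType.
Variable n : nat.
Local Notation V := 'I_n.
Variable x : edge n -> R.
Variable c : edge n -> R.
Hypothesis hc0 : forall e, 0 <= c e.
Variable rep : edge n -> V * V.
Hypothesis hrep : forall e, val e = [set (rep e).1; (rep e).2].
Hypothesis hn : (2 < n)%N.
Hypothesis hw : forall w, is_walk x w -> 1 <= \sum_e ((w e : nat)%:R * c e).

Definition cp (e : edge n) : R := dist x c (rep e).1 (rep e).2.

Lemma cp_eq e a b : val e = [set a; b] -> cp e = dist x c a b.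
Proof.
move=> he; rewrite /cp; have := hrep e; rewrite he => /esym/eqP; rewrite set2eq.
by case/orP => /andP [/eqP -> /eqP ->] //; rewrite dist_sym.
Qed.

Lemma cp_ge0 e : 0 <= cp e.
Proof. exact: dist_ge0. Qed.

Lemma exists_edge (a b : V) : a != b -> exists e : edge n, val e = [set a; b].
Proof.
move=> h; have hc : #|[set a; b]| == 2 by rewrite cards2 h.
by exists (exist (fun S : {set V} => #|S| == 2) [set a; b] hc).
Qed.

Lemma sum_edge_ind (f : edge n -> R) (e0 : edge n) X : val e0 = X ->
  \sum_e ((val e == X) : nat)%:R * f e = f e0.
Proof.
move=> h0; rewrite (bigD1 e0) //= h0 eqxx mul1r big1 ?addr0 // => e hne.
case: eqP => [h|_]; last by rewrite mul0r.
by move: hne; rewrite -h0 in h; rewrite (val_inj h) eqxx.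
Qed.

Lemma count_sum (T : eqType) (P : pred T) s : (count P s)%:R = \sum_(p <- s) ((P p) : nat)%:R :> R.
Proof. by elim: s => [|a s IH]; rewrite ?big_nil ?big_cons //= natrD IH. Qed.

Lemma pcost_flatten L : pcost c (flatten L) = \sum_(l <- L) pcost c l.
Proof.
elim: L => [|l L IH]; first by rewrite big_nil pcost_nil.
by rewrite /= pcost_cat big_cons IH.
Qed.

Lemma prs_flatten (u : V) q (rp : V * V -> seq V) :
  (forall p, p \in prs u q -> last p.1 (rp p) = p.2) ->
  prs u (flatten (map rp (prs u q))) = flatten (map (fun p => prs p.1 (rp p)) (prs u q)) /\
  last u (flatten (map rp (prs u q))) = last u q.
Proof.
elim: q u => [|v q IH] u h //=.
have hv : last u (rp (u, v)) = v by apply: (h (u, v)); rewrite prs_cons mem_head.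
have h' : forall p, p \in prs v q -> last p.1 (rp p) = p.2.
  by move=> p hp; apply: h; rewrite prs_cons in_cons hp orbT.
have [IH1 IH2] := IH v h'.
by rewrite prs_cat hv IH1 last_cat hv IH2.
Qed.

Lemma all_count0 (T : Type) (a : pred T) s : all a s = (count (predC a) s == 0%N).
Proof. by elim: s => //= y s ->; case: (a y). Qed.

Lemma prs_mem2 (u v : V) r : v \in r -> exists2 p, p \in prs u r & p.2 = v.
Proof.
case/splitPr => r1 r2; exists (last u r1, v) => //.
by rewrite prs_cat prs_cons mem_cat mem_head orbT.
Qed.

Lemma walk_of_closed (u : V) W : last u W = u -> cover W -> all (spp x) (prs u W) ->
  (forall e, ecnt e (prs u W) <= 2)%N ->
  exists w, is_walk x w /\ forall e, (w e : nat) = ecnt e (prs u W).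
Proof.
move=> hl hcov hall h2.
exists [ffun e => inord (ecnt e (prs u W))].
have hw' : forall e, (([ffun e => inord (ecnt e (prs u W))] : {ffun edge n -> 'I_3}) e : nat) = ecnt e (prs u W).
  by move=> e; rewrite ffunE inordK // ltnS.
split=> //.
case: W hl hcov hall h2 hw' => [|w1 W] hl hcov hall h2 hw'.
  by have := hcov (Ordinal (ltnW (ltnW hn))).
have eW : w1 :: W = rcons (belast w1 W) u by rewrite [LHS]lastI; move: hl => /= ->.
exists (u :: belast w1 W); split.
- move=> v; have := hcov v; rewrite eW mem_rcons in_cons => /orP [->//|->].
  by rewrite orbT.
- by rewrite cyc_prs -eW.
- by move=> e; rewrite hw' cyc_prs -eW.
Qed.

Lemma tour_ge1 (T : {set edge n}) : is_tour T -> 1 <= \sum_e ((e \in T) : nat)%:R * cp e.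
Proof.
move=> [s [hu hcov ->]].
have hsz : size s = n.
  rewrite -(card_uniqP hu) -[RHS]card_ord; apply: eq_card => v; by rewrite hcov.
case: s hu hcov hsz => [|y s'] hu hcov hsz; first by exfalso; have := hn; rewrite -[X in (_ < X)%N]hsz.
set s := y :: s' in hu hcov hsz *.
set ps := zip s (rot 1 s).
have hps : ps = prs y (rcons s' y) by rewrite /ps cyc_prs.
have hnext : forall p, p \in ps -> p.2 = next s p.1 by move=> p; apply: zip_next.
have hp1 : forall p, p \in ps -> p.1 \in s by move=> p; apply: in_zip1.
have hsz3 : (2 < size s)%N by rewrite hsz.
have hneq : forall p, p \in ps -> p.1 != p.2.
  move=> p hp; rewrite (hnext p hp) eq_sym; exact: (next_rot3 hu hsz3 (hp1 p hp)).1.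
have inT : forall p (e : edge n), p \in ps -> val e = [set p.1; p.2] ->
    e \in [set e0 : edge n | [exists v : V, val e0 == [set v; next s v]]].
  move=> p e hp he; rewrite inE; apply/existsP; exists p.1; by rewrite he -(hnext p hp).
have Tge0 : forall e, 0 <= ((e \in [set e0 : edge n | [exists v : V, val e0 == [set v; next s v]]]) : nat)%:R * cp e.
  by move=> e; rewrite mulr_ge0 ?ler0n ?cp_ge0.
case: (boolP (all (fun p => dist x c p.1 p.2 < 1) ps)) => hall; last first.
  move: hall; rewrite -has_predC => /hasP [p hp] /=; rewrite -leNgt => hge.
  have [e he] := exists_edge (hneq p hp).
  rewrite (bigD1 e) //= (inT p e hp he) mul1r (cp_eq he).
  apply: (le_trans hge); rewrite lerDl; apply: sumr_ge0 => e' _; exact: Tge0.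
have hex : forall p : V * V, exists r : seq V, dist x c p.1 p.2 < 1 ->
    okp x p.1 p.2 r /\ pcost c (prs p.1 r) = dist x c p.1 p.2.
  move=> p; case: (ltP (dist x c p.1 p.2) 1) => h.
    have [r hr] := dist_lt1 h; by exists r.
  by exists [::].
have [rp hrp] := choice hex.
have hrp' : forall p, p \in ps -> okp x p.1 p.2 (rp p) /\ pcost c (prs p.1 (rp p)) = dist x c p.1 p.2.
  by move=> p hp; apply: hrp; move/allP: hall; apply.
have hlast : forall p, p \in prs y (rcons s' y) -> last p.1 (rp p) = p.2.
  by move=> p; rewrite -hps => hp; have [/andP [/eqP -> _] _] := hrp' p hp.
have [hW1 hW2] := prs_flatten hlast.
set W := flatten (map rp (prs y (rcons s' y))) in hW1 hW2.
have hWc : last y W = y by rewrite hW2 last_rcons.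
have hWcov : cover W.
  move=> v; have hv : v \in rcons s' y.
    have := hcov v; rewrite in_cons mem_rcons in_cons => /orP [->//|->]; by rewrite orbT.
  have [p hp hp2] := prs_mem2 y hv.
  apply/flatten_mapP; exists p => //.
  have hp' : p \in ps by rewrite hps.
  rewrite -hp2 -(hlast p hp); apply: last_in'.
  apply/eqP => er; have := hlast p hp; rewrite er /= => e12.
  by move: (hneq p hp'); rewrite e12 eqxx.
have hWall : all (spp x) (prs y W).
  rewrite hW1; apply/allP => q /flatten_mapP [p hp hq].
  rewrite -hps in hp; have [/andP [_ ha] _] := hrp' p hp.
  by move/allP: ha; apply.
have [u' [W' [g1 g2 g3 g4]]] := reduce hWc hWcov.
have hall' : all (spp x) (prs u' W').
  have hsw : swapinv (predC (spp x)) by move=> p; rewrite /= spp_swapinv.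
  have := g4 (predC (spp x)) hsw.
  move: hWall; rewrite !all_count0 => /eqP ->; by rewrite leqn0.
have [w [hw1 hw2]] := walk_of_closed g1 g2 hall' g3.
have := hw hw1.
under eq_bigr do rewrite hw2.
move=> h1; apply: (le_trans h1).
have -> : \sum_e (ecnt e (prs u' W'))%:R * c e = pcost c (prs u' W') by [].
apply: (le_trans (pcost_le hc0 (fun e => g4 _ (ecnt_swapinv e)))).
rewrite hW1 pcost_flatten big_map.
rewrite -hps.
have -> : \sum_(p <- ps) pcost c (prs p.1 (rp p)) = \sum_(p <- ps) dist x c p.1 p.2.
  rewrite big_seq_cond [RHS]big_seq_cond; apply: eq_bigr => p /andP [hp _].
  by have [_ ->] := hrp' p hp.
have -> : \sum_(p <- ps) dist x c p.1 p.2 =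
    \sum_(p <- ps) \sum_e ((val e == [set p.1; p.2]) : nat)%:R * cp e.
  rewrite big_seq_cond [RHS]big_seq_cond; apply: eq_bigr => p /andP [hp _].
  have [e he] := exists_edge (hneq p hp).
  by rewrite (sum_edge_ind _ he) (cp_eq he).
rewrite exchange_big /=; apply: ler_sum => e _.
rewrite -mulr_suml -count_sum; apply: ler_wpM2r; first exact: cp_ge0.
rewrite ler_nat.
case: (boolP (e \in _)) => hnT.
  by rewrite -/(ecnt e ps); apply: ecnt_tour_le1.
rewrite leqn0 -/(ecnt e ps); apply/eqP/eqP; rewrite -leqn0 leqNgt; apply/negP => hpos.
have [p hp Pp] := count_has hpos.
by move: hnT; rewrite (inT p e hp (eqP Pp)).
Qed.

Hypothesis hx0 : forall e, 0 <= x e.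

Lemma rep_neq e : (rep e).1 != (rep e).2.
Proof. by apply: card_set2_neq; rewrite -hrep; exact: (valP e). Qed.

Lemma cpA_ge0 (L : {set V} -> V -> R) :
  (forall i j k : V, i != j -> k != i -> k != j -> 0 <= L [set i; j] k) ->
  0 <= \sum_e cp e * Aop L (rep e).1 (rep e).2.
Proof.
move=> hL.
rewrite (eq_bigr (fun e => \sum_S0 \sum_k0 L S0 k0 * (cp e * Aop (@Dl R n S0 k0) (rep e).1 (rep e).2))); last first.
  move=> e _; rewrite Aop_lin mulr_sumr; apply: eq_bigr => S0 _; rewrite mulr_sumr.
  by apply: eq_bigr => k0 _; ring.
rewrite exchange_big; apply: sumr_ge0 => S0 _; rewrite exchange_big; apply: sumr_ge0 => k0 _.
rewrite -mulr_sumr.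
case: (boolP (nd S0 k0)) => hnd; last first.
  by rewrite big1 ?mulr0 // => e _; rewrite Aop_degen ?mulr0 // rep_neq.
case/andP: hnd => /cards2P [a [b [hab ES]]]; rewrite ES !inE negb_or => /andP [hka hkb].
apply: mulr_ge0; first by apply: hL.
have hak : a != k0 by rewrite eq_sym.
have hbk : b != k0 by rewrite eq_sym.
under eq_bigr do rewrite Aop_delta // ?rep_neq // -(hrep _).
rewrite (eq_bigr (fun e => ((val e == [set a; k0]) : nat)%:R * cp e +
   ((val e == [set b; k0]) : nat)%:R * cp e - ((val e == [set a; b]) : nat)%:R * cp e)); last first.
  by move=> e _; ring.
rewrite sumrB big_split /=.
have [e1 he1] := exists_edge hak.
have [e2 he2] := exists_edge hbk.
have [e3 he3] := exists_edge hab.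
rewrite (sum_edge_ind _ he1) (sum_edge_ind _ he2) (sum_edge_ind _ he3).
rewrite (cp_eq he1) (cp_eq he2) (cp_eq he3) subr_ge0 [dist x c b k0]dist_sym //.
exact: dist_tri.
Qed.

Lemma weak_plus (L : {set V} -> V -> R) (mu : {set edge n} -> R) :
  feasible_DOPTplus x L mu -> obj_DOPTplus mu <= \sum_e c e * x e.
Proof.
move=> [hcon hL hmu].
have hA : forall e, \sum_(T | `[< is_tour T >]) ((e \in T) : nat)%:R * mu T +
    Aop L (rep e).1 (rep e).2 <= x e.
  move=> e; have := hcon e (rep e).1 (rep e).2 (hrep e).
  by rewrite (hrep e) /Aop addrC.
have hcpA := cpA_ge0 hL.
rewrite /obj_DOPTplus.
apply: (@le_trans _ _ (\sum_(T | `[< is_tour T >]) mu T * \sum_e ((e \in T) : nat)%:R * cp e)).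
  apply: ler_sum => T /asboolP hT; rewrite -{1}(mulr1 (mu T)); apply: ler_wpM2l.
    exact: hmu.
  exact: tour_ge1.
have -> : \sum_(T | `[< is_tour T >]) mu T * \sum_e ((e \in T) : nat)%:R * cp e =
    \sum_e cp e * \sum_(T | `[< is_tour T >]) ((e \in T) : nat)%:R * mu T.
  under eq_bigr do rewrite mulr_sumr.
  rewrite exchange_big /=; apply: eq_bigr => e _; rewrite mulr_sumr.
  by apply: eq_bigr => T _; ring.
apply: (@le_trans _ _ (\sum_e cp e * (x e - Aop L (rep e).1 (rep e).2))).
  apply: ler_sum => e _; apply: ler_wpM2l; first exact: cp_ge0.
  by rewrite lerBrDr.
under eq_bigr do rewrite mulrBr.
rewrite sumrB.
apply: (@le_trans _ _ (\sum_e cp e * x e)).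
  by rewrite lerBlDr lerDl.
apply: ler_sum => e _; case: (ltP 0 (x e)) => h.
  apply: ler_wpM2r; first exact: hx0.
  by rewrite /cp; apply: dist_edge.
have -> : x e = 0 by apply/eqP; rewrite eq_le h hx0.
by rewrite !mulr0.
Qed.

End TourCost.
Section PlusFromII.
Variable R : realFieldType.
Variable n : nat.
Local Notation V := 'I_n.
Variable x : edge n -> R.
Hypothesis hn : (2 < n)%N.
Hypothesis hx0 : forall e, 0 <= x e.

Lemma spp_pdist (p : V * V) : spp x p -> pdist p.
Proof.
move=> /existsP [e /andP [/eqP he _]]; apply: card_set2_neq; rewrite -he; exact: (valP e).
Qed.

Lemma walk_supp w e : is_walk x w -> (0 < (w e : nat))%N -> 0 < x e.
Proof.
move=> [s [_ hall hcnt]]; rewrite hcnt => hpos.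
have [p hp Pp] := count_has hpos.
move/allP: hall => /(_ p hp) /existsP [e' /andP [/eqP he' hx]].
by have -> : e = e' by apply: val_inj; rewrite he'; apply/eqP.
Qed.

Lemma walk_has_edge w : is_walk x w -> exists e, (0 < (w e : nat))%N.
Proof.
move=> [s [hcov hall hcnt]].
have hv := hcov (Ordinal (ltnW (ltnW hn))).
case: s hcov hall hcnt hv => [|y s'] // hcov hall hcnt _.
rewrite cyc_prs in hall hcnt.
case: s' hall hcnt {hcov} => [|z s''] hall hcnt.
  move: hall => /= /andP [/existsP [e /andP [/eqP he _]] _].
  by exists e; rewrite hcnt /= he eqxx.
move: hall => /= /andP [/existsP [e /andP [/eqP he _]] _].
by exists e; rewrite hcnt prs_cons /= he eqxx.
Qed.

Lemma Aop_sumseq (T : Type) (s : seq T) (F : T -> {set V} -> V -> R) i j :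
  Aop (fun S k => \sum_(t <- s) F t S k) i j = \sum_(t <- s) Aop (F t) i j.
Proof.
rewrite /Aop exchange_big /=; apply: eq_bigr => k _.
by rewrite -sumrN -!big_split.
Qed.

Lemma Aop_sumfin (T : finType) (P : pred T) (a : T -> R) (F : T -> {set V} -> V -> R) i j :
  Aop (fun S k => \sum_(t | P t) a t * F t S k) i j = \sum_(t | P t) a t * Aop (F t) i j.
Proof.
rewrite /Aop.
under [RHS]eq_bigr do rewrite mulr_sumr.
rewrite exchange_big /=; apply: eq_bigr => k _.
rewrite -sumrN -!big_split /=; apply: eq_bigr => t _; ring.
Qed.

Lemma walk_tour w : is_walk x w -> exists (T : {set edge n}) (L : {set V} -> V -> R),
  [/\ is_tour T, forall S k, 0 <= L S k &
      forall e i j, val e = [set i; j] -> ((e \in T) : nat)%:R + Aop L i j <= (w e : nat)%:R].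
Proof.
move=> [s [hcov hall hcnt]].
have hv := hcov (Ordinal (ltnW (ltnW hn))).
case: s hcov hall hcnt hv => [|y s'] // hcov hall hcnt _.
rewrite cyc_prs in hall hcnt.
have hc : last y (rcons s' y) = y by rewrite last_rcons.
have hcov' : cover (rcons s' y).
  move=> v; have := hcov v; rewrite in_cons mem_rcons in_cons => /orP [->//|->].
  by rewrite orbT.
have hd : all (@pdist n) (prs y (rcons s' y)).
  by apply/allP => p hp; apply: spp_pdist; move/allP: hall; apply.
have [u' [r' [tl [h1 h2 h3 h4 h5]]]] := @shortcut R n y (rcons s' y) hc hcov' hd.
exists [set e : edge n | [exists v : V, val e == [set v; next r' v]]].
exists (fun S k => \sum_(t <- tl) @Dl R n [set t.1.1; t.1.2] t.2 S k).
split.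
- by exists r'.
- by move=> S k; apply: sumr_ge0 => t _; rewrite /Dl ler0n.
- move=> e i j he.
  have hij : i != j by apply: card_set2_neq; rewrite -he; exact: (valP e).
  rewrite Aop_sumseq.
  have -> : \sum_(t <- tl) Aop (@Dl R n [set t.1.1; t.1.2] t.2) i j = \sum_(t <- tl) sc R t e.
    rewrite big_seq_cond [RHS]big_seq_cond; apply: eq_bigr => t /andP [ht _].
    move/allP: h4 => /(_ t ht) /and3P [d1 d2 d3].
    by rewrite Aop_delta // /sc -he.
  rewrite hcnt -/(ecnt e _); apply: (le_trans _ (h5 e)); apply: lerD => //.
  rewrite ler_nat; case: (boolP (e \in _)) => //; rewrite inE => /existsP [v /eqP hev].
  rewrite /ecnt -has_count; apply/hasP; exists (v, next r' v).
    by apply: next_in_prs => //; apply: h2.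
  by rewrite hev.
Qed.

Lemma walk_sum_le mu e : feasible_DOPTII x mu ->
  \sum_(w | `[< is_walk x w >]) ((w e : nat)%:R * mu w) <= x e.
Proof.
move=> [h1 h2]; case: (ltP 0 (x e)) => hx; first exact: h1.
rewrite big1; first exact: hx0.
move=> w /asboolP hw; case: (posnP (w e : nat)) => [->|hpos]; first by rewrite mul0r.
by have := walk_supp hw hpos; rewrite ltNge hx.
Qed.

Lemma plus_of_II mu : feasible_DOPTII x mu ->
  exists L mup, feasible_DOPTplus x L mup /\ obj_DOPTplus mup = obj_DOPTII x mu.
Proof.
move=> hfeas; have [_ hmu0] := hfeas.
have hex : forall w : {ffun edge n -> 'I_3}, exists TL : {set edge n} * ({set V} -> V -> R),
    is_walk x w -> [/\ is_tour TL.1, forall S k, 0 <= TL.2 S k &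
      forall e i j, val e = [set i; j] -> ((e \in TL.1) : nat)%:R + Aop TL.2 i j <= (w e : nat)%:R].
  move=> w; case: (boolP `[< is_walk x w >]) => [/asboolP hw|/asboolP hw].
    by have [T [L hTL]] := walk_tour hw; exists (T, L).
  by exists (set0, fun _ _ => 0).
have [f hf] := choice hex.
pose mup (T : {set edge n}) := \sum_(w | `[< is_walk x w >]) (((f w).1 == T) : nat)%:R * mu w.
pose L (S : {set V}) (k : V) := \sum_(w | `[< is_walk x w >]) mu w * (f w).2 S k.
have hsumT : forall (g : {set edge n} -> R) (w : {ffun edge n -> 'I_3}), is_walk x w ->
    \sum_(T | `[< is_tour T >]) g T * (((f w).1 == T) : nat)%:R = g (f w).1.
  move=> g w hw; have [hT _ _] := hf w hw.
  rewrite (bigD1 (f w).1) /=; last exact/asboolP.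
  rewrite eqxx mulr1 big1 ?addr0 // => T /andP [_ hne].
  by rewrite eq_sym (negbTE hne) mulr0.
exists L, mup; split; last first.
  rewrite /obj_DOPTplus /obj_DOPTII /mup exchange_big /=; apply: eq_bigr => w /asboolP hw.
  rewrite (eq_bigr (fun T => mu w * (((f w).1 == T) : nat)%:R)); last by move=> T _; rewrite mulrC.
  exact: (hsumT (fun _ => mu w) w hw).
split.
- move=> e i j he.
  rewrite (_ : \sum_(k | k \notin val e) _ = Aop L i j); last by rewrite /Aop he.
  rewrite /L Aop_sumfin.
  have -> : \sum_(T | `[< is_tour T >]) ((e \in T) : nat)%:R * mup T =
      \sum_(w | `[< is_walk x w >]) mu w * ((e \in (f w).1) : nat)%:R.
    rewrite /mup; under eq_bigr do rewrite mulr_sumr.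
    rewrite exchange_big /=; apply: eq_bigr => w /asboolP hw.
    rewrite -(hsumT (fun T => mu w * ((e \in T) : nat)%:R) w hw).
    by apply: eq_bigr => T _; ring.
  rewrite -big_split /=; apply: le_trans (walk_sum_le e hfeas).
  apply: ler_sum => w /asboolP hw; rewrite -mulrDr mulrC.
  apply: ler_wpM2r; first exact: hmu0.
  have [_ _ h3] := hf w hw; rewrite addrC; exact: h3.
- move=> i j k _ _ _; apply: sumr_ge0 => w /asboolP hw; apply: mulr_ge0; first exact: hmu0.
  by have [_ h2 _] := hf w hw.
- by move=> T _; apply: sumr_ge0 => w /asboolP hw; apply: mulr_ge0; rewrite ?ler0n ?hmu0.
Qed.

Lemma weak_II mu (c : edge n -> R) : feasible_DOPTII x mu -> (forall e, 0 <= c e) ->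
  (forall w, is_walk x w -> 1 <= \sum_e ((w e : nat)%:R * c e)) ->
  obj_DOPTII x mu <= \sum_e c e * x e.
Proof.
move=> hfeas hc0 hw; have [_ hmu0] := hfeas.
rewrite /obj_DOPTII.
apply: (@le_trans _ _ (\sum_(w | `[< is_walk x w >]) mu w * \sum_e ((w e : nat)%:R * c e))).
  apply: ler_sum => w /asboolP h; rewrite -{1}(mulr1 (mu w)); apply: ler_wpM2l; first exact: hmu0.
  exact: hw.
under eq_bigr do rewrite mulr_sumr.
rewrite exchange_big /=; apply: ler_sum => e _.
rewrite (eq_bigr (fun w : {ffun edge n -> 'I_3} => c e * ((w e : nat)%:R * mu w))); last by move=> w _; ring.
rewrite -mulr_sumr; apply: ler_wpM2l; first exact: hc0.
exact: walk_sum_le.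
Qed.

End PlusFromII.
Section MainSec.
Variable R : realFieldType.
Variable n : nat.
Variable x : edge n -> R.

Definition WT := {ffun edge n -> 'I_3}.
Definition Iv := (WT + edge n)%type.
Definition Jc := ((((edge n + WT) + WT) + edge n) + unit)%type.
Definition walkb (w : WT) := `[< is_walk x w >].

Definition a1 (e : edge n) (i : Iv) : R :=
  match i with inl w => if walkb w then ((w e : nat)%:R) else 0 | inr _ => 0 end.
Definition a2 (w : WT) (i : Iv) : R :=
  match i with inl w' => if w' == w then -1 else 0 | inr _ => 0 end.
Definition a3 (w : WT) (i : Iv) : R :=
  match i with inl _ => 0 | inr e => if walkb w then - ((w e : nat)%:R) else 0 end.
Definition a4 (e : edge n) (i : Iv) : R :=
  match i with inl _ => 0 | inr e' => if e' == e then -1 else 0 end.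
Definition a5 (i : Iv) : R :=
  match i with inl w => if walkb w then -1 else 0 | inr e => x e end.

Definition csys (j : Jc) : cstr R Iv :=
  match j with
  | inl (inl (inl (inl e))) => ([ffun i => a1 e i], x e)
  | inl (inl (inl (inr w))) => ([ffun i => a2 w i], 0)
  | inl (inl (inr w)) => ([ffun i => a3 w i], if walkb w then -1 else 0)
  | inl (inr e) => ([ffun i => a4 e i], 0)
  | inr _ => ([ffun i => a5 i], 0)
  end.

Lemma sum_unit (F : unit -> R) : \sum_(i : unit) F i = F tt.
Proof. by rewrite (big_pred1 tt) // => -[]. Qed.

Lemma sum_Iv (F : Iv -> R) : \sum_i F i = \sum_(w : WT) F (inl w) + \sum_(e : edge n) F (inr e).
Proof. by rewrite big_sumType. Qed.

Lemma sum_Jc (F : Jc -> R) : \sum_j F j =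
  \sum_e F (inl (inl (inl (inl e)))) + \sum_(w : WT) F (inl (inl (inl (inr w)))) +
  \sum_(w : WT) F (inl (inl (inr w))) + \sum_e F (inl (inr e)) + F (inr tt).
Proof. by rewrite !big_sumType sum_unit. Qed.

Lemma sum_pick (T : finType) (t0 : T) (G : T -> R) :
  \sum_t (if t == t0 then G t else 0) = G t0.
Proof.
rewrite (bigD1 t0) //= eqxx big1 ?addr0 // => t /negbTE ht; by rewrite ht.
Qed.

Lemma sum_mkcond (T : finType) (P : pred T) (G : T -> R) :
  \sum_t ((if P t then G t else 0)) = \sum_(t | P t) G t.
Proof. by rewrite [RHS]big_mkcond. Qed.

Lemma satc_ffun (a : Iv -> R) b (y : {ffun Iv -> R}) :
  satc y ([ffun i => a i], b) = (\sum_(w : WT) a (inl w) * y (inl w) + \sum_e a (inr e) * y (inr e) <= b).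
Proof.
rewrite /satc /= (eq_bigr (fun i => a i * y i)); last by move=> i _; rewrite ffunE.
by rewrite sum_Iv.
Qed.

Lemma sum0m (T : finType) (f : T -> R) : \sum_t 0 * f t = 0.
Proof. by rewrite big1 // => t _; rewrite mul0r. Qed.

Lemma sat1 y e : satc y (csys (inl (inl (inl (inl e))))) ->
  \sum_(w | walkb w) (w e : nat)%:R * y (inl w) <= x e.
Proof.
rewrite satc_ffun /a1 sum0m addr0.
rewrite (eq_bigr (fun w => if walkb w then (w e : nat)%:R * y (inl w) else 0)).
  by rewrite sum_mkcond.
by move=> w _; case: (walkb w); rewrite ?mul0r.
Qed.

Lemma sat2 y w : satc y (csys (inl (inl (inl (inr w))))) -> 0 <= y (inl w).
Proof.
rewrite satc_ffun /a2 sum0m addr0.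
rewrite (eq_bigr (fun w' => if w' == w then - y (inl w) else 0)).
  by rewrite sum_pick oppr_le0.
by move=> w' _; case: eqP => [->|_]; rewrite ?mul0r ?mulN1r.
Qed.

Lemma sat3 y w : walkb w -> satc y (csys (inl (inl (inr w)))) ->
  1 <= \sum_e (w e : nat)%:R * y (inr e).
Proof.
move=> hw; rewrite satc_ffun /a3 hw sum0m add0r.
by rewrite (eq_bigr (fun e => - ((w e : nat)%:R * y (inr e)))) ?sumrN ?lerN2 // => e _; rewrite mulNr.
Qed.

Lemma sat4 y e : satc y (csys (inl (inr e))) -> 0 <= y (inr e).
Proof.
rewrite satc_ffun /a4 sum0m add0r.
rewrite (eq_bigr (fun e' => if e' == e then - y (inr e) else 0)).
  by rewrite sum_pick oppr_le0.
by move=> e' _; case: eqP => [->|_]; rewrite ?mul0r ?mulN1r.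
Qed.

Lemma sat5 y : satc y (csys (inr tt)) ->
  \sum_e y (inr e) * x e <= \sum_(w | walkb w) y (inl w).
Proof.
rewrite satc_ffun /a5.
rewrite (eq_bigr (fun w => - (if walkb w then y (inl w) else 0))); last first.
  by move=> w _; case: (walkb w); rewrite ?mul0r ?oppr0 ?mulN1r.
rewrite sumrN sum_mkcond addrC subr_le0.
by rewrite (eq_bigr (fun e => y (inr e) * x e)) // => e _; rewrite mulrC.
Qed.

Lemma coef_inl (u : Jc -> R) w :
  \sum_j u j * (csys j).1 (inl w) =
  \sum_e u (inl (inl (inl (inl e)))) * (if walkb w then (w e : nat)%:R else 0)
  - u (inl (inl (inl (inr w)))) + (if walkb w then - u (inr tt) else 0).
Proof.
rewrite sum_Jc /=.
under eq_bigr do rewrite ffunE /a1.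
under [X in _ + X + _ + _ + _]eq_bigr do rewrite ffunE /a2.
under [X in _ + X + _ + _]eq_bigr do rewrite ffunE /a3 mulr0.
under [X in _ + X + _]eq_bigr do rewrite ffunE /a4 mulr0.
rewrite ffunE /a5 !big1_eq !addr0.
rewrite (eq_bigr (fun w' => if w' == w then - u (inl (inl (inl (inr w)))) else 0)).
  rewrite sum_pick; congr (_ + _ + _); by case: (walkb w); rewrite ?mulr0 ?mulrN1.
move=> w' _; case: (eqVneq w' w) => [->|hne]; first by rewrite ?eqxx mulrN1.
by rewrite ?(negbTE hne) ?mulr0.
Qed.

Lemma coef_inr (u : Jc -> R) e :
  \sum_j u j * (csys j).1 (inr e) =
  - \sum_(w | walkb w) u (inl (inl (inr w))) * (w e : nat)%:R
  - u (inl (inr e)) + u (inr tt) * x e.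
Proof.
rewrite sum_Jc /=.
under eq_bigr do rewrite ffunE /a1 mulr0.
under [X in _ + X + _ + _ + _]eq_bigr do rewrite ffunE /a2 mulr0.
under [X in _ + X + _ + _]eq_bigr do rewrite ffunE /a3.
under [X in _ + X + _]eq_bigr do rewrite ffunE /a4.
rewrite ffunE /a5 !big1_eq !add0r.
rewrite (eq_bigr (fun e' => if e' == e then - u (inl (inr e)) else 0)); last first.
  move=> e' _; case: (eqVneq e' e) => [->|hne]; first by rewrite ?eqxx mulrN1.
  by rewrite ?(negbTE hne) ?mulr0.
rewrite sum_pick; congr (_ + _ + _).
rewrite -[RHS]sumrN -[RHS]sum_mkcond; apply: eq_bigr => w _.
by case: (walkb w); rewrite ?mulr0 ?oppr0 ?mulrN.
Qed.

Lemma coef_const (u : Jc -> R) :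
  \sum_j u j * (csys j).2 =
  \sum_e u (inl (inl (inl (inl e)))) * x e - \sum_(w | walkb w) u (inl (inl (inr w))).
Proof.
rewrite sum_Jc /=.
under [X in _ + X + _ + _ + _]eq_bigr do rewrite mulr0.
under [X in _ + X + _]eq_bigr do rewrite mulr0.
rewrite mulr0 !big1_eq !addr0.
congr (_ + _); rewrite -[RHS]sumrN -[RHS]sum_mkcond; apply: eq_bigr => w _.
by case: (walkb w); rewrite ?mulr0 ?oppr0 ?mulrN1.
Qed.

Lemma main_sec : (3 <= n)%N -> is_vertex_PSEP x -> exists v, opt_DOPTplus x v /\ opt_DOPTII x v.
Proof.
move=> hn [[_ _ hx01] _].
have hx0 : forall e, 0 <= x e by move=> e; case/andP: (hx01 e).
have hrepex : forall e : edge n, exists p : 'I_n * 'I_n, val e = [set p.1; p.2].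
  by move=> e; have /cards2P [a [b [_ he]]] := valP e; exists (a, b).
have [rep hrep] := choice hrepex.
case: (farkas csys) => [[y hy] | [b [hb hd]]].
- pose mu (w : {ffun edge n -> 'I_3}) := y (inl w).
  pose c (e : edge n) := y (inr e).
  have hc0 : forall e, 0 <= c e by move=> e; exact: (sat4 (hy _)).
  have hw : forall w, is_walk x w -> 1 <= \sum_e (w e : nat)%:R * c e.
    by move=> w hw; apply: (sat3 _ (hy _)); apply/asboolP.
  have hfeas : feasible_DOPTII x mu.
    split; last by move=> w _; exact: (sat2 (hy _)).
    by move=> e _; exact: (sat1 (hy (inl (inl (inl (inl e)))))).
  have h5 : \sum_e c e * x e <= obj_DOPTII x mu by exact: (sat5 (hy (inr tt))).
  exists (obj_DOPTII x mu); split.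
  + have [L [mup [hf ho]]] := plus_of_II hn hx0 hfeas.
    split; first by exists L, mup.
    move=> L' mu' hf'; exact: (le_trans (weak_plus hc0 hrep hn hw hx0 hf') h5).
  + split; first by exists mu.
    move=> mu' hf'; exact: (le_trans (weak_II hx0 hf' hc0 hw) h5).
- exfalso.
  have [u [hu0 [hcoef hconst]]] := deriv_explicit hd.
  pose u1 e := u (inl (inl (inl (inl e)))).
  pose u3 w := u (inl (inl (inr w))).
  pose t := u (inr tt).
  have Hinl : forall w, walkb w -> t <= \sum_e u1 e * (w e : nat)%:R.
    move=> w hw; have := hcoef (inl w); rewrite ffunE coef_inl hw.
    rewrite (eq_bigr (fun e => u1 e * (w e : nat)%:R)) // => h0.
    have e0 : \sum_e u1 e * (w e : nat)%:R = u (inl (inl (inl (inr w)))) + t.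
      by move: h0; rewrite /t; lra.
    by rewrite e0 lerDr.
  have Hinr : forall e, \sum_(w | walkb w) u3 w * (w e : nat)%:R <= t * x e.
    move=> e; have := hcoef (inr e); rewrite ffunE coef_inr => h0.
    have e0 : \sum_(w | walkb w) u3 w * (w e : nat)%:R = t * x e - u (inl (inr e)).
      by move: h0; rewrite /t; lra.
    by rewrite e0 lerBlDr lerDl.
  have Hconst : \sum_e u1 e * x e < \sum_(w | walkb w) u3 w.
    by move: hconst; rewrite coef_const => h; rewrite -subr_lt0; apply: le_lt_trans h hb.
  have key : t * (\sum_(w | walkb w) u3 w) <= t * (\sum_e u1 e * x e).
    rewrite [X in X <= _]mulr_sumr.
    apply: (@le_trans _ _ (\sum_(w | walkb w) u3 w * \sum_e u1 e * (w e : nat)%:R)).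
      apply: ler_sum => w hw; rewrite mulrC; apply: ler_wpM2l; first exact: hu0.
      exact: Hinl.
    under eq_bigr do rewrite mulr_sumr.
    rewrite exchange_big /= mulr_sumr; apply: ler_sum => e _.
    rewrite (eq_bigr (fun w => u1 e * (u3 w * (w e : nat)%:R))); last by move=> w _; ring.
    rewrite -mulr_sumr (mulrCA t); apply: ler_wpM2l; first exact: hu0.
    exact: Hinr.
  have ht0 : 0 <= t by apply: hu0.
  case: (ltP 0 t) => ht.
    by move: key; rewrite ler_pM2l // leNgt Hconst.
  have t0 : t = 0 by apply/eqP; rewrite eq_le ht ht0.
  have hA : \sum_(w | walkb w) u3 w = 0.
    apply: big1 => w hw.
    have [e he] := walk_has_edge hn (asboolW hw).
    have h1 := Hinr e; rewrite t0 mul0r in h1.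
    have h2 : u3 w * (w e : nat)%:R <= 0.
      apply: le_trans h1; rewrite (bigD1 w) //= lerDl.
      by apply: sumr_ge0 => w' _; rewrite mulr_ge0 ?ler0n ?hu0.
    apply/eqP; rewrite eq_le hu0 andbT.
    by move: h2; rewrite pmulr_lle0 // ltr0n.
  move: Hconst; rewrite hA ltNge => /negP; apply.
  by apply: sumr_ge0 => e _; rewrite mulr_ge0 ?hu0 ?hx0.
Qed.

End MainSec.

Theorem mainTheorem6 (R : realFieldType) (n : nat) (x : edge n -> R) :
  (3 <= n)%N -> is_vertex_PSEP x ->
  exists v : R, opt_DOPTplus x v /\ opt_DOPTII x v.
Proof. exact: main_sec. Qed.
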